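(* Let $n$ be odd. Let $X_1\sim\mathsf{Bernoulli}(p)$ and $X_k=X_{k-1}\oplus U_k$ for $k=2,\dots,n$, where $U_2,\dots,U_n$ are i.i.d. $\mathsf{Bernoulli}(r)$ independent of $X_1$; let $Y_k=X_k\oplus V_k$ for $k=1,\dots,n$, where $V_1,\dots,V_n$ are i.i.d. $\mathsf{Bernoulli}(\alpha)$ independent of $X^n$. Assume $p\in[\frac12,1)$, $\alpha\in(0,\frac12)$, $\bar\alpha\bar p>\alpha p$, and $\frac{r}{\bar r}<\left(\frac{\alpha}{\bar\alpha}\right)^{n-1}$. Let $$\zeta_n(\varepsilon)=\bar r\,\frac{\mathsf{P}_{\mathsf{c}}(X^n|Y^n)-\varepsilon^n}{p(\bar\alpha\bar r)^n-\bar p(\alpha\bar r)^n}.$$ Then there exists $\varepsilon_{\mathsf L}<\mathsf{P}_{\mathsf{c}}^{1/n}(X^n|Y^n)$ such that for every $\varepsilon\in[\varepsilon_{\mathsf L},\mathsf{P}_{\mathsf{c}}^{1/n}(X^n|Y^n)]$, $$1-\zeta_n(\varepsilon)\Pr(Y^n=\mathbf 1)\le\underline{\mathcal{h}}_n^n(\varepsilon)\le1-\zeta_n(\varepsilon)\alpha^n,$$ and the $2^n$-ary Z-channel $\mathsf{Z}_n(\zeta_n(\varepsilon))$ achieves the lower bound on this interval.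
   Context: $\bar a=1-a$; $\oplus$ is addition mod 2; $\mathsf{Bernoulli}(p)$ has $\Pr(\cdot=1)=p$. $\mathsf{P}_{\mathsf{c}}(X^n|Z^n)=\sum_{z^n}\max_{x^n}P_{X^nZ^n}(x^n,z^n)$. For $\varepsilon\in[\mathsf{P}_{\mathsf{c}}^{1/n}(X^n),\mathsf{P}_{\mathsf{c}}^{1/n}(X^n|Y^n)]$, $\underline{\mathcal{h}}_n(\varepsilon)=\sup\{\mathsf{P}_{\mathsf{c}}^{1/n}(Y^n|Z^n): P_{Z^n|Y^n},\ \mathcal{Z}^n=\{0,1\}^n,\ X^n - Y^n - Z^n,\ \mathsf{P}_{\mathsf{c}}^{1/n}(X^n|Z^n)\le\varepsilon\}$. $\mathbf 0=(0,\dots,0)$, $\mathbf 1=(1,\dots,1)$. The $2^n$-ary Z-channel $\mathsf{Z}_n(\gamma)$ on $\{0,1\}^n$ is given by $\mathsf{W}(y|y)=1$ for $y\ne\mathbf 1$, $\mathsf{W}(\mathbf 0|\mathbf 1)=\gamma$, $\mathsf{W}(\mathbf 1|\mathbf 1)=1-\gamma$; ''achieves the lower bound'' means it satisfies $\mathsf{P}_{\mathsf{c}}^{1/n}(X^n|Z^n)\le\varepsilon$ and $\mathsf{P}_{\mathsf{c}}(Y^n|Z^n)=1-\zeta_n(\varepsilon)\Pr(Y^n=\mathbf 1)$. *)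

(* Defs.v *)
From HB Require Import structures.
From mathcomp Require Import all_boot all_order all_algebra.
From mathcomp Require Import all_classical all_reals all_analysis.
Set Implicit Arguments. Unset Strict Implicit. Unset Printing Implicit Defensive.
Import Order.TTheory GRing.Theory Num.Theory.
Local Open Scope ring_scope.
Local Open Scope classical_set_scope.

Section Defs.
Variables (R : realType) (n : nat) (p r a : R).

(* binary vectors {0,1}^n; coordinate k (0-based) of x is nth false x k,
   so X_1 is coordinate 0 *)
Definition bvec := n.-tuple bool.

Definition ones : bvec := [tuple of nseq n true].
Definition zeros : bvec := [tuple of nseq n false].

Definition PX (x : bvec) : R :=
  (if nth false x 0 then p else 1 - p) *
  \prod_(1 <= k < n) (if nth false x k != nth false x k.-1 then r else 1 - r).

Definition PYgX (y x : bvec) : R :=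
  \prod_(i < n) (if tnth x i != tnth y i then a else 1 - a).

Definition PXY (x y : bvec) : R := PX x * PYgX y x.

(* a channel P_{Z^n|Y^n} with Z^n taking values in {0,1}^n:  W y z = P(z|y) *)
Definition channel := {ffun bvec -> {ffun bvec -> R}}.
Definition is_channel (W : channel) : Prop :=
  (forall y z, 0 <= W y z) /\ (forall y, \sum_z W y z = 1).

(* joint laws under the Markov chain X^n - Y^n - Z^n *)
Definition PXZ (W : channel) (x z : bvec) : R := \sum_y PXY x y * W y z.
Definition PYZ (W : channel) (y z : bvec) : R := (\sum_x PXY x y) * W y z.

Definition Pc_X : R := \big[Num.max/0]_x PX x.
Definition Pc_XgY : R := \sum_y \big[Num.max/0]_x PXY x y.
Definition Pc_XgZ (W : channel) : R := \sum_z \big[Num.max/0]_x PXZ W x z.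
Definition Pc_YgZ (W : channel) : R := \sum_z \big[Num.max/0]_y PYZ W y z.

Definition root_n (t : R) : R := t `^ (n%:R^-1).

Definition h_low (eps : R) : R :=
  sup [set t | exists W : channel, is_channel W /\
                root_n (Pc_XgZ W) <= eps /\ t = root_n (Pc_YgZ W)].

Definition zeta (eps : R) : R :=
  (1 - r) * (Pc_XgY - eps ^+ n) /
  (p * ((1 - a) * (1 - r)) ^+ n - (1 - p) * (a * (1 - r)) ^+ n).

Definition PrY1 : R := \sum_x PXY x ones.

Definition Zchan (g : R) : channel :=
  [ffun y => [ffun z =>
     if y != ones then (z == y)%:R
     else if z == zeros then g
     else if z == ones then 1 - g else 0]].

End Defs.

Arguments is_channel {R n} W.
Arguments PXZ {R} n p r a W x z.
Arguments PYZ {R} n p r a W y z.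
Arguments Pc_XgZ {R} n p r a W.
Arguments Pc_YgZ {R} n p r a W.

(* Main.v *)
Require Import Defs.
From HB Require Import structures.
From mathcomp Require Import all_boot all_order all_algebra.
From mathcomp Require Import all_classical all_reals all_analysis.
From mathcomp Require Import ring lra zify.
Import Order.TTheory GRing.Theory Num.Theory.
Local Open Scope ring_scope.

Section Aux.
Variable R : realType.

Lemma sum_tuple_cons (m : nat) (F : m.+1.-tuple bool -> R) :
  \sum_x F x = \sum_(b : bool) \sum_(x : m.-tuple bool) F [tuple of b :: x].
Proof.
rewrite pair_big /=.
rewrite (reindex (fun u : bool * m.-tuple bool => [tuple of u.1 :: u.2])) //=.
exists (fun x : m.+1.-tuple bool => (thead x, [tuple of behead x])).
  by case=> b x _ /=; congr pair; apply: val_inj.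
move=> x _ /=; apply: val_inj => /=.
by case: x => -[|c s] //= _.
Qed.

Lemma sum_tuple0 (F : 0.-tuple bool -> R) : \sum_x F x = F [tuple].
Proof.
rewrite (eq_bigr (fun _ => F [tuple])); last by move=> x _; rewrite tuple0.
by rewrite sumr_const card_tuple expn0 mulr1n.
Qed.

Lemma PYgX_cons m (a : R) b c (y x : m.-tuple bool) :
  PYgX a [tuple of b :: y] [tuple of c :: x] =
  (if c != b then a else 1 - a) * PYgX a y x.
Proof.
rewrite /PYgX big_ord_recl; congr (_ * _).
by apply: eq_bigr => i _; rewrite !(tnth_nth false).
Qed.

Lemma sum_PYgX m (a : R) (x : m.-tuple bool) : \sum_y PYgX a y x = 1.
Proof.
elim: m x => [|m IH] x.
  by rewrite sum_tuple0 /PYgX big_ord0.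
rewrite sum_tuple_cons.
have -> : x = [tuple of thead x :: behead x].
  by apply: val_inj; case: x => -[|c s].
under eq_bigr do under eq_bigr do rewrite PYgX_cons.
under eq_bigr do rewrite -mulr_sumr IH mulr1.
by rewrite big_bool /=; case: (thead x) => /=; ring.
Qed.

Lemma PX_cons m (q r : R) b (x : m.+1.-tuple bool) :
  PX q r [tuple of b :: x] =
  (if b then q else 1 - q) * PX (if b then 1 - r else r) r x.
Proof.
rewrite /PX /= big_nat_recl //=; congr (_ * _); congr (_ * _).
  by case: b; case: (nth false x 0) => //=; rewrite opprB addrC subrK.
apply: eq_big_nat => k /andP[k1 _].
by case: k k1.
Qed.

Lemma sum_PX m (q r : R) : \sum_(x : m.+1.-tuple bool) PX q r x = 1.
Proof.
elim: m q => [|m IH] q.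
  rewrite sum_tuple_cons big_bool /= !sum_tuple0 /PX /= !big_geq //.
  by rewrite !mulr1; ring.
rewrite sum_tuple_cons.
under eq_bigr do under eq_bigr do rewrite PX_cons.
under eq_bigr do rewrite -mulr_sumr IH mulr1.
by rewrite big_bool /=; ring.
Qed.

Lemma sum_PX_n n (n0 : (0 < n)%N) (q r : R) : \sum_(x : n.-tuple bool) PX q r x = 1.
Proof. by case: n n0 => // m _; exact: sum_PX. Qed.

Lemma prod_if (I : finType) (P : pred I) (u v : R) :
  \prod_i (if P i then u else v) = u ^+ #|P| * v ^+ #|predC P|.
Proof.
rewrite (bigID P) /= -!prodr_const; congr (_ * _).
  by apply: eq_big => // i Pi; rewrite Pi.
by apply: eq_big => // i; move=> /negPf ->.
Qed.

Lemma bigmax_at (T : finType) (F : T -> R) x0 : 0 <= F x0 ->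
  (forall x, F x <= F x0) -> \big[Num.max/0]_x F x = F x0.
Proof.
move=> F0 Fx; apply/eqP; rewrite eq_le; apply/andP; split.
  by apply/bigmax_leP; split.
exact: le_bigmax.
Qed.

Lemma bigmax_ge0 (T : finType) (P : pred T) (F : T -> R) : 0 <= \big[Num.max/0]_(x | P x) F x.
Proof. rewrite bigmax_idl /Order.max; case: ifP => //; exact: ltW. Qed.

Lemma bigmax_le_sum (T : finType) (F : T -> R) : (forall x, 0 <= F x) ->
  \big[Num.max/0]_x F x <= \sum_x F x.
Proof.
move=> F0; apply/bigmax_leP; split; first exact: sumr_ge0.
by move=> i _; rewrite (bigD1 i) //= lerDl sumr_ge0.
Qed.

Lemma bigmax_lt_c (T : finType) (P : pred T) (F : T -> R) c : 0 < c ->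
  (forall x, P x -> F x < c) -> \big[Num.max/0]_(x | P x) F x < c.
Proof. by move=> c0 H; elim/big_ind: _ => // x y x0 y0; rewrite /Order.max; case: ifP. Qed.

Lemma argmax_ex (T : finType) (F : T -> R) (t : T) : (forall x, 0 <= F x) ->
  exists x0, \big[Num.max/0]_x F x = F x0.
Proof.
move=> F0; have [i0 _ ->] := @eq_bigmax _ _ _ 0 t xpredT F isT (fun i _ => F0 i).
by exists i0.
Qed.

End Aux.

Section Main.
Variables (R : realType) (n : nat) (p r a : R).
Hypotheses (n0 : (0 < n)%N) (hp1 : 1 <= 2 * p) (hp2 : p < 1) (ha0 : 0 < a)
  (ha1 : 2 * a < 1) (hr0 : 0 <= r) (hr1 : r < 1) (hpa : a * p < (1 - a) * (1 - p))
  (hra : r * (1 - a) ^+ n.-1 < (1 - r) * a ^+ n.-1).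

Ltac slra := have := hp1; have := hp2; have := ha0; have := ha1;
  have := hr0; have := hr1; have := hpa; intros; lra.

Lemma a_lt : a < 1 - a. Proof. slra. Qed.
Lemma p_ge : 1 - p <= p. Proof. slra. Qed.

Lemma r_lt : r < 1 - r.
Proof.
have h1 : a ^+ n.-1 <= (1 - a) ^+ n.-1 by rewrite lerXn2r ?nnegrE; slra.
have h2 : 0 < (1 - a) ^+ n.-1 by apply: exprn_gt0; slra.
rewrite -(ltr_pM2r h2); apply: (lt_le_trans hra).
apply: ler_wpM2l h1; slra.
Qed.

Lemma PX_ge0 (x : bvec n) : 0 <= PX p r x.
Proof.
apply: mulr_ge0; first by case: ifP; slra.
by apply: prodr_ge0 => k _; case: ifP; slra.
Qed.

Lemma PYgX_ge0 (y x : bvec n) : 0 <= PYgX a y x.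
Proof. by apply: prodr_ge0 => k _; case: ifP; slra. Qed.

Lemma PXY_ge0 (x y : bvec n) : 0 <= PXY p r a x y.
Proof. exact: mulr_ge0 (PX_ge0 x) (PYgX_ge0 y x). Qed.

Definition PY (y : bvec n) := \sum_x PXY p r a x y.

Lemma PY_ge0 y : 0 <= PY y.
Proof. by apply: sumr_ge0 => x _; exact: PXY_ge0. Qed.

Lemma sum_PY : \sum_y PY y = 1.
Proof.
rewrite /PY exchange_big /=.
under eq_bigr do rewrite /PXY -mulr_sumr sum_PYgX mulr1.
exact: sum_PX_n.
Qed.

Lemma PYgX_gea (y x : bvec n) : a ^+ n <= PYgX a y x.
Proof.
rewrite -[X in a ^+ X](card_ord n) -prodr_const /PYgX.
by apply: ler_prod => i _; case: ifP; slra.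
Qed.

Lemma PY_gea y : a ^+ n <= PY y.
Proof.
rewrite /PY /PXY.
apply: (@le_trans _ _ (\sum_(x : bvec n) PX p r x * a ^+ n)).
  by rewrite -mulr_suml sum_PX_n // mul1r.
apply: ler_sum => x _; apply: ler_wpM2l; first exact: PX_ge0.
exact: PYgX_gea.
Qed.

Definition T := (1 - r) ^+ n.-1.

Lemma nth_ones k : (k < n)%N -> nth false (ones n) k = true.
Proof. by move=> kn; rewrite /= nth_nseq kn. Qed.
Lemma nth_zeros k : nth false (zeros n) k = false.
Proof. by rewrite /= nth_nseq; case: ifP. Qed.

Lemma PX_const (b : bool) : PX p r (if b then ones n else zeros n) =
  (if b then p else 1 - p) * T.
Proof.
rewrite /PX /T; congr (_ * _).
  by case: b; rewrite ?nth_ones ?nth_zeros.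
rewrite -subn1 -prodr_const_nat; apply: eq_big_nat => k /andP[k1 kn].
case: b; rewrite ?nth_ones ?nth_zeros //.
by apply: leq_ltn_trans kn; exact: leq_pred.
Qed.

Lemma PX_ones : PX p r (ones n) = p * T.
Proof. exact: (PX_const true). Qed.
Lemma PX_zeros : PX p r (zeros n) = (1 - p) * T.
Proof. exact: (PX_const false). Qed.

Definition k1 (y : bvec n) := #|[pred i | tnth y i]|.
Definition k0 (y : bvec n) := #|predC [pred i | tnth y i]|.

Lemma k10 y : (k1 y + k0 y)%N = n.
Proof. by rewrite /k1 /k0 cardC card_ord. Qed.

Lemma PYgX_ones y : PYgX a y (ones n) = (1 - a) ^+ k1 y * a ^+ k0 y.
Proof.
rewrite /PYgX /k1 /k0 -prod_if; apply: eq_bigr => i _.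
by rewrite /ones /zeros tnth_nseq /=; case: (tnth y i).
Qed.

Lemma PYgX_zeros y : PYgX a y (zeros n) = a ^+ k1 y * (1 - a) ^+ k0 y.
Proof.
rewrite /PYgX /k1 /k0 -prod_if; apply: eq_bigr => i _.
by rewrite /ones /zeros tnth_nseq /=; case: (tnth y i).
Qed.


Definition i0 : 'I_n := Ordinal n0.

Lemma prod_neq0 (u : R) : \prod_(i | i != i0) u = u ^+ n.-1.
Proof.
have := prodr_const (predC1 i0) u; rewrite cardC1 card_ord => <-.
by apply: eq_bigl => i; rewrite !inE.
Qed.

Lemma PYgX_cmp (x c y : bvec n) : tnth x i0 = tnth c i0 ->
  a ^+ n.-1 * PYgX a y x <= (1 - a) ^+ n.-1 * PYgX a y c.
Proof.
move=> xc; rewrite /PYgX (bigD1 i0) //= [in X in _ <= X](bigD1 i0) //= xc -!prod_neq0 mulrCA [X in _ <= X]mulrCA.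
apply: ler_wpM2l; first by case: ifP; slra.
rewrite -!big_split /=; apply: ler_prod => i _.
have h1 := a_lt; have h2 := ha0.
have h3 : a * a <= (1 - a) * (1 - a).
  have -> : (1 - a) * (1 - a) = a * a + (1 - 2 * a) by ring.
  rewrite lerDl; slra.
have h4 : 0 <= a * a by apply: mulr_ge0; slra.
have h5 : 0 <= a * (1 - a) by apply: mulr_ge0; slra.
have h6 : a * a <= (1 - a) * a by apply: ler_wpM2r; slra.
have h7 : a * (1 - a) <= (1 - a) * (1 - a) by apply: ler_wpM2r; slra.
by case: (tnth x i); case: (tnth c i); case: (tnth y i) => /=; apply/andP; split; lra.
Qed.

Definition cst (x : bvec n) : bvec n := if nth false x 0%N then ones n else zeros n.

Lemma nth_cst (x : bvec n) k : (k < n)%N -> nth false (cst x) k = nth false x 0.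
Proof. by move=> kn; rewrite /cst; case: ifP => _; rewrite ?nth_ones ?nth_zeros. Qed.

Lemma tnth_cst0 (x : bvec n) : tnth x i0 = tnth (cst x) i0.
Proof. by rewrite !(tnth_nth false) nth_cst. Qed.

Lemma trans_ex (x : bvec n) : x != cst x ->
  exists k, ((1 <= k < n)%N && (nth false x k != nth false x k.-1)).
Proof.
move=> xc.
have [//|H] := pselect (exists k, ((1 <= k < n)%N && (nth false x k != nth false x k.-1))).
exfalso; move/negP: xc; apply; apply/eqP.
have E' : forall k, (1 <= k < n)%N -> nth false x k = nth false x k.-1.
  move=> k kr; apply/eqP; apply/negPn/negP => ne; apply: H; exists k; by rewrite kr ne.
have E : forall k, (k < n)%N -> nth false x k = nth false x 0.
  elim=> [//|k IH] kn.
  rewrite E' /=; last by rewrite kn.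
  by apply: IH; apply: ltnW.
apply: val_inj; apply: (@eq_from_nth _ false); first by rewrite !size_tuple.
by move=> k; rewrite size_tuple => kn; rewrite nth_cst // E.
Qed.

Lemma PX_cmp (x : bvec n) : x != cst x -> (1 - r) * PX p r x <= r * PX p r (cst x).
Proof.
move=> /trans_ex [k /andP [kr kt]].
have kin : k \in index_iota 1 n by rewrite mem_index_iota.
have U := iota_uniq 1 (n - 1).
rewrite /PX !(bigD1_seq k kin U) /= kt.
rewrite !nth_cst //; last by case/andP: kr.
2: by case/andP: kr => _; apply: leq_ltn_trans; exact: leq_pred.
rewrite eqxx /=.
set f := (if _ then p else 1 - p).
set A := \big[_/_]_(i <- _ | _) _.
set B := \big[_/_]_(i <- _ | _) _.
have AB : A <= B.
  rewrite /A /B big_seq_cond [X in _ <= X]big_seq_cond.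
  apply: ler_prod => j /andP [jin _]; move: jin; rewrite mem_index_iota => /andP [j1 jn].
  rewrite !nth_cst //; last by apply: leq_ltn_trans jn; exact: leq_pred.
  rewrite eqxx /=; have := r_lt; case: ifP => _ h; apply/andP; split; slra.
have f0 : 0 <= f by rewrite /f; case: ifP; slra.
have A0 : 0 <= A by apply: prodr_ge0 => j _; case: ifP; slra.
have -> : (1 - r) * (f * (r * A)) = (f * r * (1 - r)) * A by ring.
have -> : r * (f * ((1 - r) * B)) = (f * r * (1 - r)) * B by ring.
apply: ler_wpM2l => //; apply: mulr_ge0; [apply: mulr_ge0|]; slra.
Qed.

Lemma T_gt0 : 0 < T.
Proof. by apply: exprn_gt0; slra. Qed.

Lemma PYgX_gt0 (y x : bvec n) : 0 < PYgX a y x.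
Proof. apply: lt_le_trans (PYgX_gea y x); exact: exprn_gt0. Qed.

Lemma PX_cst_gt0 (x : bvec n) : 0 < PX p r (cst x).
Proof.
rewrite /cst (PX_const (nth false x 0)).
have := T_gt0; case: ifP => _ h; apply: mulr_gt0 => //; slra.
Qed.

Lemma PXY_cst_gt0 (x y : bvec n) : 0 < PXY p r a (cst x) y.
Proof. exact: mulr_gt0 (PX_cst_gt0 x) (PYgX_gt0 y _). Qed.

Lemma MAP_strict (x y : bvec n) : x != cst x -> PXY p r a x y < PXY p r a (cst x) y.
Proof.
move=> xc.
have K0 : 0 < (1 - r) * a ^+ n.-1 by apply: mulr_gt0; [slra | exact: exprn_gt0].
rewrite -(ltr_pM2l K0).
apply: (@le_lt_trans _ _ (r * (1 - a) ^+ n.-1 * PXY p r a (cst x) y)).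
  have -> : (1 - r) * a ^+ n.-1 * PXY p r a x y =
    ((1 - r) * PX p r x) * (a ^+ n.-1 * PYgX a y x) by rewrite /PXY; ring.
  have -> : r * (1 - a) ^+ n.-1 * PXY p r a (cst x) y =
    (r * PX p r (cst x)) * ((1 - a) ^+ n.-1 * PYgX a y (cst x)) by rewrite /PXY; ring.
  apply: ler_pM.
  - by apply: mulr_ge0; [slra | exact: PX_ge0].
  - by apply: mulr_ge0; [apply: exprn_ge0; slra | exact: PYgX_ge0].
  - exact: PX_cmp.
  - by apply: PYgX_cmp; exact: tnth_cst0.
by rewrite ltr_pM2r //; exact: PXY_cst_gt0.
Qed.

Lemma MAP_le (x y : bvec n) : PXY p r a x y <= PXY p r a (cst x) y.
Proof.
have [e|ne] := eqVneq x (cst x); first by rewrite -e.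
exact/ltW/MAP_strict.
Qed.


Definition cb (b : bool) : bvec n := if b then ones n else zeros n.

Lemma k1_ones : k1 (ones n) = n.
Proof.
rewrite /k1 -[RHS](card_ord n); apply: eq_card => i.
by rewrite inE /ones tnth_nseq.
Qed.
Lemma k0_ones : k0 (ones n) = 0%N.
Proof. have := k10 (ones n); rewrite k1_ones; lia. Qed.
Lemma k0_zeros : k0 (zeros n) = n.
Proof.
rewrite /k0 -[RHS](card_ord n); apply: eq_card => i.
by rewrite !inE /zeros tnth_nseq.
Qed.
Lemma k1_zeros : k1 (zeros n) = 0%N.
Proof. have := k10 (zeros n); rewrite k0_zeros; lia. Qed.

Lemma ones_neq_zeros : ones n != zeros n.
Proof.
apply/negP => /eqP E; have := congr1 (fun t : bvec n => nth false t 0) E.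
by rewrite /= !nth_nseq n0.
Qed.

Definition Delta := PXY p r a (ones n) (ones n) - PXY p r a (zeros n) (ones n).

Lemma DeltaE : Delta = T * (p * (1 - a) ^+ n - (1 - p) * a ^+ n).
Proof.
rewrite /Delta /PXY PX_ones PX_zeros PYgX_ones PYgX_zeros k1_ones k0_ones !expr0 !mulr1.
ring.
Qed.

Lemma an_le : a ^+ n <= (1 - a) ^+ n.
Proof. by rewrite lerXn2r ?nnegrE; slra. Qed.

Lemma Delta_ge0 : 0 <= Delta.
Proof.
rewrite DeltaE; apply: mulr_ge0; first exact/ltW/T_gt0.
rewrite subr_ge0; apply: ler_pM; [slra | apply: exprn_ge0; slra | exact: p_ge | exact: an_le].
Qed.

Lemma Delta_gt0 : 0 < Delta.
Proof.
rewrite DeltaE; apply: mulr_gt0; first exact: T_gt0.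
rewrite subr_gt0; apply: (@le_lt_trans _ _ (p * a ^+ n)).
  by apply: ler_wpM2r; [apply: exprn_ge0; slra | exact: p_ge].
rewrite ltr_pM2l; last slra.
by rewrite ltrXn2r ?nnegrE -?lt0n //; slra.
Qed.

Lemma diff_le (b1 b2 : bool) (y : bvec n) :
  PXY p r a (cb b1) y - PXY p r a (cb b2) y <= Delta.
Proof.
have [-> | ne] := eqVneq b1 b2; first by rewrite subrr Delta_ge0.
have E1 : (1 - a) ^+ n = (1 - a) ^+ k1 y * (1 - a) ^+ k0 y by rewrite -exprD k10.
have E2 : a ^+ n = a ^+ k1 y * a ^+ k0 y by rewrite -exprD k10.
rewrite DeltaE E1 E2.
set A := a ^+ k1 y; set S := (1 - a) ^+ k1 y; set A' := a ^+ k0 y; set S' := (1 - a) ^+ k0 y.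
have A0 : 0 <= A by apply: exprn_ge0; slra.
have A'0 : 0 <= A' by apply: exprn_ge0; slra.
have AS : A <= S by rewrite lerXn2r ?nnegrE; slra.
have AS' : A' <= S' by rewrite lerXn2r ?nnegrE; slra.
have T0 := T_gt0.
case: b1 b2 ne => -[] // _; rewrite /cb /PXY ?PX_ones ?PX_zeros ?PYgX_ones ?PYgX_zeros -/A -/S -/A' -/S'.
- rewrite -subr_ge0.
  have -> : T * (p * (S * S') - (1 - p) * (A * A')) - (p * T * (S * A') - (1 - p) * T * (A * S'))
    = T * ((p * S + (1 - p) * A) * (S' - A')) by ring.
  apply: mulr_ge0; first exact: ltW.
  apply: mulr_ge0; last by rewrite subr_ge0.
  apply: addr_ge0; apply: mulr_ge0; slra.
- rewrite -subr_ge0.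
  have -> : T * (p * (S * S') - (1 - p) * (A * A')) - ((1 - p) * T * (A * S') - p * T * (S * A'))
    = T * ((S' + A') * (p * S - (1 - p) * A)) by ring.
  apply: mulr_ge0; first exact: ltW.
  apply: mulr_ge0; first by apply: addr_ge0 => //; slra.
  rewrite subr_ge0; apply: ler_pM => //; [slra | exact: p_ge].
Qed.

Definition g (y : bvec n) : bvec n :=
  if PXY p r a (zeros n) y <= PXY p r a (ones n) y then ones n else zeros n.

Lemma g_cb y : g y = cb (PXY p r a (zeros n) y <= PXY p r a (ones n) y).
Proof. by rewrite /g /cb; case: ifP. Qed.

Lemma cst_cb (x : bvec n) : cst x = cb (nth false x 0).
Proof. by []. Qed.

Lemma MAP2 (x y : bvec n) : PXY p r a x y <= PXY p r a (g y) y.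
Proof.
apply: (le_trans (MAP_le x y)); rewrite cst_cb /g.
case: ifP => h; case: (nth false x 0) => //=.
by apply: ltW; rewrite ltNge h.
Qed.

Lemma maxXY y : \big[Num.max/0]_x PXY p r a x y = PXY p r a (g y) y.
Proof. by apply: (@bigmax_at R (bvec n) (fun x => PXY p r a x y) (g y)) => [|x]; [exact: PXY_ge0 | exact: MAP2]. Qed.

Lemma Pc_XgYE : Pc_XgY n p r a = \sum_y PXY p r a (g y) y.
Proof. by apply: eq_bigr => y _; rewrite maxXY. Qed.

Lemma PX_le_ones (x : bvec n) : PX p r x <= PX p r (ones n).
Proof.
apply: (@le_trans _ _ (PX p r (cst x))).
  have [e|ne] := eqVneq x (cst x); first by rewrite -e.
  have h := PX_cmp x ne; have c0 : 0 <= PX p r (cst x) by exact: PX_ge0.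
  have r0 : 0 < 1 - r by slra.
  rewrite -(ler_pM2l r0); apply: (le_trans h); apply: ler_wpM2r => //.
  exact/ltW/r_lt.
rewrite cst_cb /cb; case: (nth false x 0) => //.
rewrite PX_ones PX_zeros; apply: ler_wpM2r; [exact/ltW/T_gt0 | exact: p_ge].
Qed.

Lemma Pc_XE : Pc_X n p r = PX p r (ones n).
Proof. by apply: (@bigmax_at R (bvec n) (fun x => PX p r x) (ones n)) => [|x]; [exact: PX_ge0 | exact: PX_le_ones]. Qed.

Lemma En (u : R) : u ^+ n = u * u ^+ n.-1.
Proof. by rewrite -exprS prednK. Qed.

Lemma key_lt : p * a ^+ n < (1 - p) * (1 - a) ^+ n.
Proof.
rewrite !En.
have -> : p * (a * a ^+ n.-1) = (a * p) * a ^+ n.-1 by ring.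
have -> : (1 - p) * ((1 - a) * (1 - a) ^+ n.-1) = ((1 - a) * (1 - p)) * (1 - a) ^+ n.-1 by ring.
apply: (@lt_le_trans _ _ (((1 - a) * (1 - p)) * a ^+ n.-1)).
  by rewrite ltr_pM2r // exprn_gt0.
apply: ler_wpM2l; first by apply: mulr_ge0; slra.
by rewrite lerXn2r ?nnegrE; slra.
Qed.

Lemma zz_gt : PXY p r a (ones n) (zeros n) < PXY p r a (zeros n) (zeros n).
Proof.
rewrite /PXY PX_ones PX_zeros PYgX_ones PYgX_zeros k1_zeros k0_zeros !expr0 !mul1r.
have T0 := T_gt0.
have -> : p * T * a ^+ n = T * (p * a ^+ n) by ring.
have -> : (1 - p) * T * (1 - a) ^+ n = T * ((1 - p) * (1 - a) ^+ n) by ring.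
by rewrite ltr_pM2l // key_lt.
Qed.

Lemma g_zeros : g (zeros n) = zeros n.
Proof. by rewrite /g; case: ifP => // h; have := zz_gt; rewrite ltNge h. Qed.

Lemma Pc_X_lt : Pc_X n p r < Pc_XgY n p r a.
Proof.
rewrite Pc_XE Pc_XgYE.
have -> : PX p r (ones n) = \sum_y PXY p r a (ones n) y.
  by rewrite /PXY -mulr_sumr sum_PYgX mulr1.
rewrite (bigD1 (zeros n)) //= [X in _ < X](bigD1 (zeros n)) //= g_zeros.
apply: ltr_leD; first exact: zz_gt.
by apply: ler_sum => y _; exact: MAP2.
Qed.


Lemma sum3 (F : bvec n -> R) :
  \sum_z F z = F (zeros n) + F (ones n) + \sum_(z | (z != zeros n) && (z != ones n)) F z.
Proof.
rewrite (bigD1 (zeros n)) //= (bigD1 (ones n)) /=; last by rewrite ones_neq_zeros.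
rewrite addrA; congr (_ + _); apply: eq_bigl => z; by rewrite andbC.
Qed.

Lemma ZchanE (gm : R) (y z : bvec n) : Zchan n gm y z =
  if y != ones n then (z == y)%:R
  else if z == zeros n then gm else if z == ones n then 1 - gm else 0.
Proof. by rewrite /Zchan !ffunE. Qed.

Lemma zeros_neq_ones : zeros n != ones n.
Proof. by rewrite eq_sym ones_neq_zeros. Qed.

Lemma Zchan_ones (gm : R) (z : bvec n) : Zchan n gm (ones n) z =
  if z == zeros n then gm else if z == ones n then 1 - gm else 0.
Proof. by rewrite ZchanE eqxx. Qed.

Lemma Zchan_other (gm : R) (y z : bvec n) : y != ones n -> Zchan n gm y z = (z == y)%:R.
Proof. by move=> yo; rewrite ZchanE yo. Qed.

Lemma Zchan_channel (gm : R) : 0 <= gm <= 1 -> is_channel (Zchan n gm).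
Proof.
move=> /andP [g0 g1]; split.
  move=> y z; rewrite ZchanE; case: ifP => _; first by case: (z == y).
  case: ifP => // _; case: ifP => // _; rewrite subr_ge0 //.
move=> y; rewrite sum3.
have [-> | yo] := eqVneq y (ones n).
  rewrite !Zchan_ones eqxx (negPf ones_neq_zeros) eqxx big1 ?addr0; first by ring.
  by move=> z /andP [zz zo]; rewrite Zchan_ones (negPf zz) (negPf zo).
rewrite !Zchan_other //.
have [-> | yz] := eqVneq y (zeros n).
  rewrite (negPf ones_neq_zeros) big1 /=; first by rewrite addr0 addr0.
  by move=> z /andP [zz _]; rewrite (Zchan_other _ _ _ zeros_neq_ones) (negPf zz).
rewrite (bigD1 y) /=; last by rewrite yz yo.
rewrite eq_sym (negPf yo) Zchan_other // eqxx big1 /=; first by rewrite add0r addr0 add0r.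
by move=> z /andP [_ zy]; rewrite Zchan_other // (negPf zy).
Qed.


Lemma PXZ_Z (gm : R) (x z : bvec n) : PXZ n p r a (Zchan n gm) x z =
  PXY p r a x (ones n) * Zchan n gm (ones n) z + (if z != ones n then PXY p r a x z else 0).
Proof.
rewrite /PXZ (bigD1 (ones n)) //=; congr (_ + _).
case: ifP => zo.
  rewrite (bigD1 z) /=; last by rewrite zo.
  rewrite Zchan_other // eqxx mulr1 big1 ?addr0 //.
  by move=> y /andP [yo yz]; rewrite Zchan_other // eq_sym (negPf yz) mulr0.
move/negbFE: zo => /eqP ->.
by apply: big1 => y yo; rewrite Zchan_other // eq_sym (negPf yo) mulr0.
Qed.

Lemma g_ones : g (ones n) = ones n.
Proof. by rewrite /g; have := Delta_ge0; rewrite /Delta subr_ge0 => ->. Qed.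

Lemma Pc_XgZ_Z (gm : R) : 0 <= gm -> gm <= 1 ->
  (forall x, PXY p r a x (zeros n) + gm * PXY p r a x (ones n) <=
             PXY p r a (zeros n) (zeros n) + gm * PXY p r a (zeros n) (ones n)) ->
  Pc_XgZ n p r a (Zchan n gm) = Pc_XgY n p r a - gm * Delta.
Proof.
move=> g0 g1 C.
rewrite /Pc_XgZ /Pc_XgY sum3 [X in _ = X - _]sum3.
have -> : \sum_(z | (z != zeros n) && (z != ones n))
    \big[Num.max/0]_x PXZ n p r a (Zchan n gm) x z =
  \sum_(z | (z != zeros n) && (z != ones n)) \big[Num.max/0]_x PXY p r a x z.
  apply: eq_bigr => z /andP [zz zo]; apply: eq_bigr => x _.
  by rewrite PXZ_Z Zchan_ones (negPf zz) (negPf zo) /= mulr0 add0r.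
have -> : \big[Num.max/0]_x PXZ n p r a (Zchan n gm) x (zeros n) =
    PXY p r a (zeros n) (zeros n) + gm * PXY p r a (zeros n) (ones n).
  rewrite (@bigmax_at R (bvec n) (fun x => PXZ n p r a (Zchan n gm) x (zeros n)) (zeros n)).
  - by rewrite PXZ_Z Zchan_ones eqxx zeros_neq_ones addrC mulrC.
  - by rewrite PXZ_Z Zchan_ones eqxx zeros_neq_ones; apply: addr_ge0; [apply: mulr_ge0 => //; exact: PXY_ge0 | exact: PXY_ge0].
  by move=> x; rewrite !PXZ_Z Zchan_ones eqxx zeros_neq_ones addrC mulrC [X in _ <= X]addrC [X in _ <= _ + X]mulrC.
have -> : \big[Num.max/0]_x PXZ n p r a (Zchan n gm) x (ones n) =
    PXY p r a (ones n) (ones n) * (1 - gm).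
  rewrite (@bigmax_at R (bvec n) (fun x => PXZ n p r a (Zchan n gm) x (ones n)) (ones n)).
  - by rewrite PXZ_Z Zchan_ones (negPf ones_neq_zeros) /= eqxx addr0.
  - rewrite PXZ_Z Zchan_ones (negPf ones_neq_zeros) /= eqxx addr0.
    by apply: mulr_ge0; [exact: PXY_ge0 | rewrite subr_ge0].
  move=> x; rewrite !PXZ_Z Zchan_ones (negPf ones_neq_zeros) /= eqxx !addr0.
  apply: ler_wpM2r; first by rewrite subr_ge0.
  by have := MAP2 x (ones n); rewrite g_ones.
rewrite !maxXY g_zeros g_ones /Delta; ring.
Qed.

Lemma PYZE (W : channel R n) (y z : bvec n) : PYZ n p r a W y z = PY y * W y z.
Proof. by []. Qed.

Lemma Pc_YgZ_Z (gm : R) : 0 <= gm -> gm <= 1 -> gm * PY (ones n) <= PY (zeros n) ->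
  Pc_YgZ n p r a (Zchan n gm) = 1 - gm * PrY1 n p r a.
Proof.
move=> g0 g1 C.
rewrite /Pc_YgZ sum3.
have -> : \sum_(z | (z != zeros n) && (z != ones n))
    \big[Num.max/0]_y PYZ n p r a (Zchan n gm) y z =
  \sum_(z | (z != zeros n) && (z != ones n)) PY z.
  apply: eq_bigr => z /andP [zz zo].
  rewrite (@bigmax_at R (bvec n) (fun y => PYZ n p r a (Zchan n gm) y z) z).
  - by rewrite PYZE Zchan_other // eqxx mulr1.
  - by rewrite PYZE Zchan_other // eqxx mulr1 PY_ge0.
  move=> y; rewrite !PYZE (Zchan_other gm z z zo) eqxx mulr1.
  have [-> | yo] := eqVneq y (ones n).
    by rewrite Zchan_ones (negPf zz) (negPf zo) mulr0 PY_ge0.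
  rewrite (Zchan_other gm y z yo); have [-> | yz] := eqVneq z y; first by rewrite ?eqxx /= ?mulr1n ?mulr1.
  by rewrite ?(negPf yz) ?mulr0n mulr0 PY_ge0.
have -> : \big[Num.max/0]_y PYZ n p r a (Zchan n gm) y (zeros n) = PY (zeros n).
  rewrite (@bigmax_at R (bvec n) (fun y => PYZ n p r a (Zchan n gm) y (zeros n)) (zeros n)).
  - by rewrite PYZE (Zchan_other _ _ _ zeros_neq_ones) eqxx mulr1.
  - by rewrite PYZE (Zchan_other _ _ _ zeros_neq_ones) eqxx mulr1 PY_ge0.
  move=> y; rewrite !PYZE (Zchan_other _ _ _ zeros_neq_ones) eqxx mulr1.
  have [-> | yo] := eqVneq y (ones n); first by rewrite Zchan_ones eqxx mulrC.
  rewrite (Zchan_other gm y _ yo); have [-> | yz] := eqVneq (zeros n) y; first by rewrite ?eqxx /= ?mulr1n ?mulr1.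
  by rewrite ?(negPf yz) ?mulr0n mulr0 PY_ge0.
have -> : \big[Num.max/0]_y PYZ n p r a (Zchan n gm) y (ones n) = PY (ones n) * (1 - gm).
  rewrite (@bigmax_at R (bvec n) (fun y => PYZ n p r a (Zchan n gm) y (ones n)) (ones n)).
  - by rewrite PYZE Zchan_ones (negPf ones_neq_zeros) eqxx.
  - rewrite PYZE Zchan_ones (negPf ones_neq_zeros) eqxx.
    by apply: mulr_ge0; [exact: PY_ge0 | rewrite subr_ge0].
  move=> y; rewrite !PYZE Zchan_ones (negPf ones_neq_zeros) eqxx.
  have [-> | yo] := eqVneq y (ones n); first by rewrite Zchan_ones (negPf ones_neq_zeros) eqxx.
  rewrite Zchan_other // eq_sym (negPf yo) mulr0.
  by apply: mulr_ge0; [exact: PY_ge0 | rewrite subr_ge0].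
have S := sum_PY; rewrite sum3 in S.
set Sg := \sum_(z | _) PY z in S *.
rewrite /PrY1 -/(PY (ones n)).
transitivity (PY (zeros n) + PY (ones n) + Sg - gm * PY (ones n)); first ring.
by rewrite S.
Qed.


Lemma argmax_fun (F : bvec n -> bvec n -> R) : (forall y z, 0 <= F y z) ->
  exists h : bvec n -> bvec n, forall z, \big[Num.max/0]_y F y z = F (h z) z.
Proof.
move=> F0.
exists (fun z => odflt (zeros n) [pick y | \big[Num.max/0]_y' F y' z == F y z]).
move=> z; case: pickP => [y /eqP //| H].
have [y0 e] := @argmax_ex R _ (fun y => F y z) (zeros n) (fun y => F0 y z).
by have := H y0; rewrite e eqxx.
Qed.

Lemma conv (W : channel R n) : is_channel W ->
  Pc_XgY n p r a - Pc_XgZ n p r a W <= Delta / a ^+ n * (1 - Pc_YgZ n p r a W).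
Proof.
case=> W0 W1.
have [h Hh] := @argmax_fun (fun y z => PYZ n p r a W y z)
  (fun y z => mulr_ge0 (PY_ge0 y) (W0 y z)).
set K := Delta / a ^+ n.
have an0 : 0 < a ^+ n := exprn_gt0 _ ha0.
have KPY : forall y, Delta <= K * PY y.
  move=> y; rewrite /K mulrAC ler_pdivlMr //.
  by apply: ler_wpM2l; [exact: Delta_ge0 | exact: PY_gea].
have E1 : Pc_XgY n p r a = \sum_z \sum_y PXY p r a (g y) y * W y z.
  rewrite Pc_XgYE exchange_big /=; apply: eq_bigr => y _.
  by rewrite -mulr_sumr W1 mulr1.
have E2 : \sum_z \sum_y PXY p r a (g (h z)) y * W y z <= Pc_XgZ n p r a W.
  apply: ler_sum => z _.
  exact: (le_bigmax 0 (fun x => PXZ n p r a W x z) (g (h z))).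
have E3 : 1 - Pc_YgZ n p r a W =
    \sum_z (\sum_y PY y * W y z - PY (h z) * W (h z) z).
  rewrite sumrB /Pc_YgZ; congr (_ - _).
    rewrite exchange_big /= -sum_PY; apply: eq_bigr => y _.
    by rewrite -mulr_sumr W1 mulr1.
  by apply: eq_bigr => z _; rewrite Hh.
rewrite E3 E1 mulr_sumr.
apply: le_trans (lerB (lexx _) E2) _.
rewrite -sumrB; apply: ler_sum => z _.
rewrite -sumrB (bigD1 (h z)) //= [X in _ <= K * (X - _)](bigD1 (h z)) //=.
rewrite subrr add0r [X in _ <= K * (X - _)]addrC addrK mulr_sumr.
apply: ler_sum => y _.
rewrite -mulrBl mulrA; apply: ler_wpM2r; first exact: W0.
apply: le_trans (KPY y); rewrite !g_cb; exact: diff_le.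
Qed.


Lemma n_neq0 : (n%:R : R) != 0.
Proof. by rewrite pnatr_eq0 -lt0n. Qed.

Lemma rootK (t : R) : 0 <= t -> root_n n t ^+ n = t.
Proof.
move=> t0; rewrite /root_n -powR_mulrn ?powR_ge0 // -powRrM mulVf ?n_neq0 //.
exact: powRr1.
Qed.

Lemma root_exp (e : R) : 0 <= e -> root_n n (e ^+ n) = e.
Proof.
move=> e0; rewrite /root_n -powR_mulrn // -powRrM mulfV ?n_neq0 //.
exact: powRr1.
Qed.

Lemma root_ge0 (t : R) : 0 <= root_n n t.
Proof. exact: powR_ge0. Qed.

Lemma root_le (x y : R) : 0 <= x -> x <= y -> root_n n x <= root_n n y.
Proof.
move=> x0 xy; have h0 : 0 <= (n%:R : R)^-1 by rewrite invr_ge0 ler0n.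
by apply: (ge0_ler_powR h0); rewrite ?nnegrE //; try exact: le_trans xy.
Qed.

Lemma root_lt (x y : R) : 0 <= x -> x < y -> root_n n x < root_n n y.
Proof.
move=> x0 xy; have h0 : 0 < (n%:R : R)^-1 by rewrite invr_gt0 ltr0n.
by apply: (gt0_ltr_powR h0); rewrite ?nnegrE //; try exact: ltW (le_lt_trans x0 xy).
Qed.

Lemma exp_le (x y : R) : 0 <= x -> x <= y -> x ^+ n <= y ^+ n.
Proof. by move=> x0 xy; rewrite lerXn2r ?nnegrE //; exact: le_trans xy. Qed.

Lemma Pc_XgZ_ge0 W : 0 <= Pc_XgZ n p r a W.
Proof. by apply: sumr_ge0 => z _; exact: bigmax_ge0. Qed.

Lemma Pc_YgZ_ge0 W : 0 <= Pc_YgZ n p r a W.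
Proof. by apply: sumr_ge0 => z _; exact: bigmax_ge0. Qed.

Lemma Pc_YgZ_le1 W : is_channel W -> Pc_YgZ n p r a W <= 1.
Proof.
case=> W0 W1.
apply: (@le_trans _ _ (\sum_z \sum_y PYZ n p r a W y z)).
  apply: ler_sum => z _; apply: bigmax_le_sum => y.
  exact: mulr_ge0 (PY_ge0 y) (W0 y z).
rewrite exchange_big /= -sum_PY le_eqVlt; apply/orP; left; apply/eqP.
by apply: eq_bigr => y _; rewrite -mulr_sumr W1 mulr1.
Qed.

Lemma zetaE eps : zeta n p r a eps = (Pc_XgY n p r a - eps ^+ n) / Delta.
Proof.
have D0 := Delta_gt0.
rewrite /zeta !exprMn.
have -> : p * ((1 - a) ^+ n * (1 - r) ^+ n) - (1 - p) * (a ^+ n * (1 - r) ^+ n)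
  = (1 - r) * Delta by rewrite DeltaE /T (En (1 - r)); ring.
have r0 : 1 - r != 0 by apply/eqP => h; move: hr1; rewrite -subr_gt0 h ltxx.
have D1 : Delta != 0 by rewrite gt_eqF.
by rewrite [(1 - r) * Delta]mulrC [(1 - r) * (_ - _)]mulrC -mulf_div divff // mulr1.
Qed.


Definition mgap := PXY p r a (zeros n) (zeros n) -
  \big[Num.max/0]_(x | x != zeros n) PXY p r a x (zeros n).

Lemma PXYzz_gt0 : 0 < PXY p r a (zeros n) (zeros n).
Proof. exact: le_lt_trans (PXY_ge0 _ _) zz_gt. Qed.

Lemma le_zz (x : bvec n) : x != zeros n -> PXY p r a x (zeros n) < PXY p r a (zeros n) (zeros n).
Proof.
move=> xz.
have H : PXY p r a (cst x) (zeros n) <= PXY p r a (zeros n) (zeros n).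
  by rewrite cst_cb /cb; case: (nth false x 0) => //; exact: ltW zz_gt.
have [e|ne] := eqVneq x (cst x); last exact: lt_le_trans (MAP_strict _ _ ne) H.
move: xz e; rewrite cst_cb /cb; case: (nth false x 0) => xz e.
  by rewrite e; exact: zz_gt.
by rewrite e eqxx in xz.
Qed.

Lemma mgap_gt0 : 0 < mgap.
Proof. by rewrite subr_gt0; apply: bigmax_lt_c PXYzz_gt0 _ => x; exact: le_zz. Qed.

Lemma PXYoo_gt0 : 0 < PXY p r a (ones n) (ones n).
Proof. by have := Delta_gt0; have := PXY_ge0 (zeros n) (ones n); rewrite /Delta; lra. Qed.

Lemma PY_gt0 y : 0 < PY y.
Proof. exact: lt_le_trans (exprn_gt0 _ ha0) (PY_gea y). Qed.

Definition g0 := Num.min 1 (Num.min (mgap / PXY p r a (ones n) (ones n)) (PY (zeros n) / PY (ones n))).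

Lemma g0_gt0 : 0 < g0.
Proof.
rewrite /g0 !lt_min ltr01 /=; apply/andP; split; apply: divr_gt0;
  [exact: mgap_gt0 | exact: PXYoo_gt0 | exact: PY_gt0 | exact: PY_gt0].
Qed.

Lemma cond_X (gm : R) : 0 <= gm -> gm <= g0 -> forall x,
  PXY p r a x (zeros n) + gm * PXY p r a x (ones n) <=
  PXY p r a (zeros n) (zeros n) + gm * PXY p r a (zeros n) (ones n).
Proof.
move=> g0' gg x.
have [-> // | xz] := eqVneq x (zeros n).
have h1 : PXY p r a x (zeros n) <= PXY p r a (zeros n) (zeros n) - mgap.
  by rewrite /mgap opprB addrC subrK; exact: (le_bigmax_cond 0 (fun x => PXY p r a x (zeros n)) xz).
have h2 : gm * PXY p r a x (ones n) <= mgap.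
  apply: (@le_trans _ _ (gm * PXY p r a (ones n) (ones n))).
    by apply: ler_wpM2l => //; have := MAP2 x (ones n); rewrite g_ones.
  rewrite -ler_pdivlMr; last exact: PXYoo_gt0.
  by apply: le_trans gg _; rewrite /g0 !ge_min lexx !orbT.
have h3 : 0 <= gm * PXY p r a (zeros n) (ones n) by apply: mulr_ge0 => //; exact: PXY_ge0.
lra.
Qed.

Lemma cond_Y (gm : R) : 0 <= gm -> gm <= g0 -> gm * PY (ones n) <= PY (zeros n).
Proof.
move=> _ gg; rewrite -ler_pdivlMr; last exact: PY_gt0.
by apply: le_trans gg _; rewrite /g0 !ge_min lexx !orbT.
Qed.

Lemma g0_le1 : g0 <= 1.
Proof. by rewrite /g0 ge_min lexx. Qed.


Lemma main_sec : exists epsL : R,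
    root_n n (Pc_X n p r) <= epsL /\
    epsL < root_n n (Pc_XgY n p r a) /\
    forall eps : R, epsL <= eps -> eps <= root_n n (Pc_XgY n p r a) ->
      [/\ 1 - zeta n p r a eps * PrY1 n p r a <= h_low n p r a eps ^+ n,
          h_low n p r a eps ^+ n <= 1 - zeta n p r a eps * a ^+ n,
          is_channel (Zchan n (zeta n p r a eps)),
          root_n n (Pc_XgZ n p r a (Zchan n (zeta n p r a eps))) <= eps &
          Pc_YgZ n p r a (Zchan n (zeta n p r a eps))
            = 1 - zeta n p r a eps * PrY1 n p r a].
Proof.
set Pc := Pc_XgY n p r a.
have PX0 : 0 <= Pc_X n p r by rewrite Pc_XE; exact: PX_ge0.
have gD0 : 0 < g0 * Delta by apply: mulr_gt0; [exact: g0_gt0 | exact: Delta_gt0].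
set tau := Num.max (Pc_X n p r) (Pc - g0 * Delta).
have tau0 : 0 <= tau by rewrite le_max PX0.
have tauPc : tau < Pc.
  rewrite gt_max Pc_X_lt /=; lra.
exists (root_n n tau); split.
  by apply: root_le => //; rewrite le_max lexx.
split; first exact: root_lt.
move=> eps e1 e2.
have eps0 : 0 <= eps := le_trans (root_ge0 _) e1.
have Pc0 : 0 <= Pc := le_trans tau0 (ltW tauPc).
have en1 : tau <= eps ^+ n by rewrite -(rootK _ tau0); apply: exp_le => //; exact: root_ge0.
have en2 : eps ^+ n <= Pc by rewrite -(rootK _ Pc0); exact: exp_le.
set gm := zeta n p r a eps.
have DD := Delta_gt0.
have gmE : gm = (Pc - eps ^+ n) / Delta := zetaE eps.
have gm0 : 0 <= gm by rewrite gmE; apply: divr_ge0; [rewrite subr_ge0 | exact: ltW].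
have gmg0 : gm <= g0.
  rewrite gmE ler_pdivrMr //.
  have : Pc - g0 * Delta <= tau by rewrite le_max lexx orbT.
  lra.
have gm1 : gm <= 1 := le_trans gmg0 g0_le1.
have gD : gm * Delta = Pc - eps ^+ n by rewrite gmE divfK // gt_eqF.
have HZ : is_channel (Zchan n gm) by apply: Zchan_channel; rewrite gm0 gm1.
have HXZ : Pc_XgZ n p r a (Zchan n gm) = eps ^+ n.
  rewrite (Pc_XgZ_Z gm gm0 gm1 (cond_X gm gm0 gmg0)) gD -/Pc; ring.
have HYZ := Pc_YgZ_Z gm gm0 gm1 (cond_Y gm gm0 gmg0).
rewrite /h_low.
set E := (X in sup X).
have Eub : ubound E 1.
  move=> t [W [HW [_ ->]]].
  apply: le_trans (root_le _ _ (Pc_YgZ_ge0 W) (Pc_YgZ_le1 _ HW)) _.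
  by rewrite /root_n powR1.
have EZ : E (root_n n (Pc_YgZ n p r a (Zchan n gm))).
  exists (Zchan n gm); split => //; split => //.
  by rewrite HXZ root_exp.
have hge : root_n n (Pc_YgZ n p r a (Zchan n gm)) <= sup E.
  exact: (ub_le_sup (ex_intro _ 1 Eub)).
have h0 : 0 <= sup E := le_trans (root_ge0 _) hge.
set U := 1 - gm * a ^+ n.
have YU : forall W, is_channel W -> root_n n (Pc_XgZ n p r a W) <= eps ->
    Pc_YgZ n p r a W <= U.
  move=> W HW HX.
  have HX' : Pc_XgZ n p r a W <= eps ^+ n.
    by rewrite -(rootK _ (Pc_XgZ_ge0 W)); apply: exp_le => //; exact: root_ge0.
  have C := conv _ HW.
  have C' : Pc - eps ^+ n <= Delta / a ^+ n * (1 - Pc_YgZ n p r a W).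
    exact: le_trans (lerB (lexx _) HX') C.
  have an0 : 0 < a ^+ n := exprn_gt0 _ ha0.
  have Y1 : gm * a ^+ n <= 1 - Pc_YgZ n p r a W.
    rewrite gmE mulrAC ler_pdivrMr //.
    move: C'; rewrite mulrAC ler_pdivlMr // => C''.
    by rewrite [X in _ <= X]mulrC.
  rewrite /U; lra.
have Uub : ubound E (root_n n U).
  move=> t [W [HW [HX ->]]].
  exact: root_le _ _ (Pc_YgZ_ge0 W) (YU W HW HX).
have hle : sup E <= root_n n U by apply: ge_sup => //; exists (root_n n (Pc_YgZ n p r a (Zchan n gm))).
have U0 : 0 <= U by apply: le_trans (Pc_YgZ_ge0 (Zchan n gm)) _; apply: YU => //; rewrite HXZ root_exp.
split => //.
- rewrite -HYZ -(rootK _ (Pc_YgZ_ge0 (Zchan n gm))); apply: exp_le => //; exact: root_ge0.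
- by rewrite -(rootK _ U0); exact: exp_le.
- by rewrite HXZ root_exp.
Qed.

End Main.

Theorem theorem5 (R : realType) (n : nat) (p r a : R) :
  odd n ->
  2^-1 <= p -> p < 1 ->
  0 < a -> a < 2^-1 ->
  0 <= r -> r < 1 ->
  (1 - a) * (1 - p) > a * p ->
  r / (1 - r) < (a / (1 - a)) ^+ n.-1 ->
  exists epsL : R,
    root_n n (Pc_X n p r) <= epsL /\
    epsL < root_n n (Pc_XgY n p r a) /\
    forall eps : R, epsL <= eps -> eps <= root_n n (Pc_XgY n p r a) ->
      [/\ 1 - zeta n p r a eps * PrY1 n p r a <= h_low n p r a eps ^+ n,
          h_low n p r a eps ^+ n <= 1 - zeta n p r a eps * a ^+ n,
          is_channel (Zchan n (zeta n p r a eps)),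
          root_n n (Pc_XgZ n p r a (Zchan n (zeta n p r a eps))) <= eps &
          Pc_YgZ n p r a (Zchan n (zeta n p r a eps))
            = 1 - zeta n p r a eps * PrY1 n p r a].
Proof.
move=> hodd hp1 hp2 ha0 ha1 hr0 hr1 hpa hra.
have n0 : (0 < n)%N by case: n hodd hra.
have hp1' : 1 <= 2 * p.
  by move: hp1; rewrite -(ler_pM2l (ltr0n R 2)) mulfV // pnatr_eq0.
have ha1' : 2 * a < 1.
  by move: ha1; rewrite -(ltr_pM2l (ltr0n R 2)) mulfV // pnatr_eq0.
have r0 : 0 < 1 - r by rewrite subr_gt0.
have a0 : 0 < (1 - a) ^+ n.-1 by apply: exprn_gt0; rewrite subr_gt0; apply: lt_trans ha1 _; rewrite invf_lt1 ?ltr0n // ltr1n.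
have hra' : r * (1 - a) ^+ n.-1 < (1 - r) * a ^+ n.-1.
  move: hra; rewrite expr_div_n ltr_pdivrMr // mulrAC ltr_pdivlMr // => h.
  by rewrite [X in _ < X]mulrC.
exact: main_sec n0 hp1' hp2 ha0 ha1' hr0 hr1 hpa hra'.
Qed.
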